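(* Let $k$ be a field, let $\mathcal{D}$ be an admissible subcategory of the biset category $\mathcal{C}_k$, and let $F$ be a finitely generated $k$-linear functor $\mathcal{D}\to k\text{-}\mathrm{Mod}$. Let $G$ be an object of $\mathcal{D}$, and regard $F(G)$ as a module over $\mathrm{End}_{\mathcal{D}}(G)$. Then: (1) $\mathrm{Rad}(F(G))\subseteq [\mathrm{Rad}(F)](G)$; (2) if none of the simple quotients of $F$ vanishes at $G$ (i.e. $S(G)\neq 0$ for every simple quotient functor $S$ of $F$), then $\mathrm{Rad}(F(G))=[\mathrm{Rad}(F)](G)$.
   Context: The biset category $\mathcal{C}_k$ has finite groups as objects; the morphisms from $H$ to $K$ form the $k$-vector space $kB(K,H)=k\otimes_{\mathbb{Z}}B(K,H)$, where $B(K,H)$ is the Grothendieck group of finite $(K,H)$-bisets, with composition induced by the tensor product of bisets $V\times_H U$. An admissible subcategory is a subcategory of $\mathcal{C}_k$ in the sense of Bouc's book ''Biset functors for finite groups'' (Definition 4.1.3); it is a skeletally small $k$-linear category. A (biset) functor on $\mathcal{D}$ is a $k$-linear functor $\mathcal{D}\to k\text{-}\mathrm{Mod}$; these form an abelian category $\mathcal{F}_{\mathcal{D},k}$. A functor is finitely generated if it is a quotient of a finite direct sum of representable functors $\mathrm{Hom}_{\mathcal{D}}(X,-)$. $\mathrm{Rad}(F)$ denotes the intersection of all maximal subfunctors of $F$, and $\mathrm{Rad}(M)$ for a module $M$ is the intersection of its maximal submodules. The value $F(G)$ is naturally an $\mathrm{End}_{\mathcal{D}}(G)$-module, and for a subfunctor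 $M\subseteq F$, $M(G)$ is a submodule of $F(G)$. *)

(* Defs.v *)
From HB Require Import structures.
From mathcomp Require Import all_boot all_algebra.
Set Implicit Arguments. Unset Strict Implicit. Unset Printing Implicit Defensive.
Import GRing.Theory.
Local Open Scope ring_scope.

(* An admissible
   subcategory of the biset category C_k is such a category. *)
Record klinCat (k : fieldType) := KLinCat {
  cObj : Type;
  cHom : cObj -> cObj -> lmodType k;
  ccomp : forall X Y Z : cObj, cHom Y Z -> cHom X Y -> cHom X Z;
  cid : forall X : cObj, cHom X X;
  ccompDl : forall X Y Z (a : k) (f g : cHom Y Z) (h : cHom X Y),
      ccomp (a *: f + g) h = a *: ccomp f h + ccomp g h;
  ccompDr : forall X Y Z (a : k) (f : cHom Y Z) (g h : cHom X Y),
      ccomp f (a *: g + h) = a *: ccomp f g + ccomp f h;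
  ccompA : forall W X Y Z (f : cHom Y Z) (g : cHom X Y) (h : cHom W X),
      ccomp f (ccomp g h) = ccomp (ccomp f g) h;
  ccomp1l : forall X Y (f : cHom X Y), ccomp (cid Y) f = f;
  ccomp1r : forall X Y (f : cHom X Y), ccomp f (cid X) = f
}.

Arguments ccomp {k} k0 {X Y Z} : rename.
Arguments cid {k} k0 X : rename.
Arguments cHom {k} k0 X Y : rename.


Record klinFun (k : fieldType) (D : klinCat k) := KLinFun {
  fob : cObj D -> lmodType k;
  fmap : forall X Y : cObj D, cHom D X Y -> fob X -> fob Y;
  fmapD : forall X Y (a : k) (f g : cHom D X Y) (x : fob X),
      fmap (a *: f + g) x = a *: fmap f x + fmap g x;
  fmap_lin : forall X Y (f : cHom D X Y) (a : k) (x y : fob X),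
      fmap f (a *: x + y) = a *: fmap f x + fmap f y;
  fmapM : forall X Y Z (g : cHom D Y Z) (f : cHom D X Y) (x : fob X),
      fmap (ccomp D g f) x = fmap g (fmap f x);
  fmap1 : forall X (x : fob X), fmap (cid D X) x = x
}.

Arguments fob {k D} F X : rename.
Arguments fmap {k D} F {X Y} : rename.

Section FunctorNotions.
Variables (k : fieldType) (D : klinCat k).

Definition nattrans (F S : klinFun D) (eta : forall X, fob F X -> fob S X) :=
  (forall X (a : k) (x y : fob F X), eta X (a *: x + y) = a *: eta X x + eta X y) /\
  (forall X Y (f : cHom D X Y) (x : fob F X), eta Y (fmap F f x) = fmap S f (eta X x)).

Definition epi_nattrans (F S : klinFun D) (eta : forall X, fob F X -> fob S X) :=
  nattrans eta /\ (forall X (y : fob S X), exists x, eta X x = y).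

Definition subfunctor (F : klinFun D) (M : forall X, fob F X -> Prop) :=
  (forall X, M X 0) /\
  (forall X (a : k) (x y : fob F X), M X x -> M X y -> M X (a *: x + y)) /\
  (forall X Y (f : cHom D X Y) (x : fob F X), M X x -> M Y (fmap F f x)).

Definition maximal_subfunctor (F : klinFun D) (M : forall X, fob F X -> Prop) :=
  subfunctor M /\ (exists X (x : fob F X), ~ M X x) /\
  (forall N : forall X, fob F X -> Prop, subfunctor N ->
     (forall X x, M X x -> N X x) ->
     (forall X x, N X x <-> M X x) \/ (forall X x, N X x)).

Definition radF (F : klinFun D) (X : cObj D) (x : fob F X) : Prop :=
  forall M, maximal_subfunctor M -> M X x.

Definition simple_functor (S : klinFun D) :=
  (exists X (x : fob S X), x != 0) /\
  (forall N : forall X, fob S X -> Prop, subfunctor N ->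
     (forall X x, N X x -> x = 0) \/ (forall X x, N X x)).

(* Finitely generated: quotient of a finite direct sum of representable
   functors Hom_D(X_i, -), i < n. *)
Definition fin_gen (F : klinFun D) :=
  exists (n : nat) (Xs : 'I_n -> cObj D)
         (eta : forall Y, (forall i : 'I_n, cHom D (Xs i) Y) -> fob F Y),
    (forall Y (a : k) (fs gs : forall i : 'I_n, cHom D (Xs i) Y),
        eta Y (fun i => a *: fs i + gs i) = a *: eta Y fs + eta Y gs) /\
    (forall Y Z (g : cHom D Y Z) (fs : forall i : 'I_n, cHom D (Xs i) Y),
        eta Z (fun i => ccomp D g (fs i)) = fmap F g (eta Y fs)) /\
    (forall Y (y : fob F Y), exists fs, eta Y fs = y).

Definition End_submodule (F : klinFun D) (G : cObj D) (N : fob F G -> Prop) :=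
  N 0 /\ (forall x y, N x -> N y -> N (x - y)) /\
  (forall (e : cHom D G G) x, N x -> N (fmap F e x)).

Definition End_maximal_submodule (F : klinFun D) (G : cObj D) (N : fob F G -> Prop) :=
  End_submodule N /\ (exists x, ~ N x) /\
  (forall N' : fob F G -> Prop, End_submodule N' -> (forall x, N x -> N' x) ->
     (forall x, N' x <-> N x) \/ (forall x, N' x)).

Definition radM (F : klinFun D) (G : cObj D) (x : fob F G) : Prop :=
  forall N, End_maximal_submodule N -> N x.

End FunctorNotions.

(* Main.v *)
Require Import Defs.
From HB Require Import structures.
From mathcomp Require Import all_boot all_algebra.
From mathcomp Require Import boolp classical_sets.
Set Implicit Arguments. Unset Strict Implicit. Unset Printing Implicit Defensive.
Import GRing.Theory.
Local Open Scope ring_scope.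
Record subsp (k : fieldType) (V : lmodType k) := Subsp {
  sp :> V -> Prop;
  sp0 : sp 0;
  spL : forall (a : k) x y, sp x -> sp y -> sp (a *: x + y) }.

Section Q.
Variables (k : fieldType) (V : lmodType k) (M : subsp V).

Lemma spD x y : M x -> M y -> M (x + y).
Proof. by move=> hx hy; have := spL 1 hx hy; rewrite scale1r. Qed.
Lemma spZ a x : M x -> M (a *: x).
Proof. by move=> hx; have := spL a hx (sp0 M); rewrite addr0. Qed.
Lemma spN x : M x -> M (- x).
Proof. by move=> hx; have := spZ (-1) hx; rewrite scaleN1r. Qed.
Lemma spB x y : M x -> M y -> M (x - y).
Proof. by move=> hx hy; apply: spD => //; apply: spN. Qed.
Lemma spNB x y : M (x - y) -> M (y - x).
Proof. by move=> h; have := spN h; rewrite opprB. Qed.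
Lemma spT x y z : M (x - y) -> M (y - z) -> M (x - z).
Proof. by move=> h1 h2; have := spD h1 h2; rewrite addrA subrK. Qed.

Definition canon (x : V) : V := xget 0 (fun y : V => M (x - y)).
Lemma canonP x : M (x - canon x).
Proof. by apply: (@xgetI _ 0 (fun y : V => M (x - y)) x); rewrite /= subrr; apply: sp0. Qed.
Lemma canon_eq x y : M (x - y) -> canon x = canon y.
Proof.
move=> h; rewrite /canon.
have -> : (fun z : V => M (x - z)) = (fun z : V => M (y - z)).
  apply/funext => z; apply/propext; split => /=.
    by move=> hz; apply: spT (spNB h) hz.
  by move=> hz; apply: spT h hz.
by [].
Qed.

Lemma canonE x y : canon x = canon y <-> M (x - y).
Proof.
split; last exact: canon_eq.
move=> e; apply: spT (canonP x) _; rewrite e; apply: spNB; exact: canonP.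
Qed.
Lemma canon_idem x : canon (canon x) = canon x.
Proof. apply: canon_eq; apply: spNB; exact: canonP. Qed.

Record quot := Quot { qval : V; _ : canon qval == qval }.
HB.instance Definition _ := [isSub for qval].
HB.instance Definition _ := [Choice of quot by <:].

Definition pi (x : V) : quot := @Quot (canon x) (introT eqP (canon_idem x)).
Lemma qvalK q : pi (qval q) = q.
Proof. case: q => v h; apply: val_inj => /=; exact/eqP. Qed.
Lemma piE x y : pi x = pi y <-> M (x - y).
Proof.
split; last by move=> h; apply: val_inj => /=; apply: canon_eq.
by move=> e; apply/canonE; exact: (congr1 val e).
Qed.
Lemma quot_ind (P : quot -> Prop) : (forall v, P (pi v)) -> forall q, P q.
Proof. by move=> h q; rewrite -(qvalK q). Qed.
Lemma qval_pi x : M (qval (pi x) - x).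
Proof. apply: spNB; exact: canonP. Qed.

Definition qzero := pi 0.
Definition qadd (p q : quot) := pi (qval p + qval q).
Definition qopp (q : quot) := pi (- qval q).
Definition qscale (a : k) (q : quot) := pi (a *: qval q).
Lemma qaddE x y : qadd (pi x) (pi y) = pi (x + y).
Proof.
apply/piE; rewrite opprD addrACA; apply: spD; exact: qval_pi.
Qed.
Lemma qoppE x : qopp (pi x) = pi (- x).
Proof. apply/piE; rewrite opprK addrC; apply: spNB; exact: qval_pi. Qed.
Lemma qscaleE a x : qscale a (pi x) = pi (a *: x).
Proof. apply/piE; rewrite -scalerBr; apply: spZ; exact: qval_pi. Qed.

Lemma qaddA : associative qadd.
Proof.
by elim/quot_ind => x; elim/quot_ind => y; elim/quot_ind => z; rewrite !qaddE addrA.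
Qed.
Lemma qaddC : commutative qadd.
Proof. by elim/quot_ind => x; elim/quot_ind => y; rewrite !qaddE addrC. Qed.
Lemma qadd0 : left_id qzero qadd.
Proof. by elim/quot_ind => x; rewrite /qzero qaddE add0r. Qed.
Lemma qaddN : left_inverse qzero qopp qadd.
Proof. by elim/quot_ind => x; rewrite qoppE qaddE addNr. Qed.
HB.instance Definition _ := GRing.isZmodule.Build quot qaddA qaddC qadd0 qaddN.
Lemma qscaleA a b v : qscale a (qscale b v) = qscale (a * b) v.
Proof. by elim/quot_ind: v => x; rewrite !qscaleE scalerA. Qed.
Lemma qscale1 : left_id 1 qscale.
Proof. by elim/quot_ind => x; rewrite qscaleE scale1r. Qed.
Lemma qscaleDr : right_distributive qscale qadd.
Proof. by move=> a; elim/quot_ind => x; elim/quot_ind => y; rewrite qaddE !qscaleE qaddE scalerDr. Qed.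
Lemma qscaleDl v : {morph qscale^~ v: a b / a + b >-> qadd a b}.
Proof. by elim/quot_ind: v => x a b; rewrite !qscaleE qaddE scalerDl. Qed.
HB.instance Definition _ := GRing.Zmodule_isLmodule.Build k quot qscaleA qscale1 qscaleDr qscaleDl.

Lemma pi_lin a x y : pi (a *: x + y) = a *: pi x + pi y.
Proof. by rewrite -[a *: pi x]/(qscale a (pi x)) qscaleE -[_ + pi y]/(qadd _ _) qaddE. Qed.
Lemma pi0 x : pi x = 0 <-> M x.
Proof. rewrite -[0]/(pi 0) piE subr0; done. Qed.
End Q.

Lemma dbl0 (V : zmodType) (a : V) : a = a + a -> a = 0.
Proof. by move=> h; have := congr1 (fun z => z - a) h; rewrite subrr addrK => ->. Qed.

Section Main.
Variables (k : fieldType) (D : klinCat k) (F : klinFun D).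

Lemma fmap0f X Y (x : fob F X) : fmap F (0 : cHom D X Y) x = 0.
Proof.
have h := @fmapD _ _ F _ _ 1 (0 : cHom D X Y) 0 x; rewrite !scale1r addr0 in h; exact: dbl0 h.
Qed.
Lemma fmapf0 X Y (f : cHom D X Y) : fmap F f 0 = 0.
Proof.
have h := @fmap_lin _ _ F _ _ f 1 0 0; rewrite !scale1r addr0 in h; exact: dbl0 h.
Qed.
Lemma fmapZf X Y a (f : cHom D X Y) x : fmap F (a *: f) x = a *: fmap F f x.
Proof. by have := @fmapD _ _ F _ _ a f 0 x; rewrite !addr0 fmap0f addr0. Qed.
Lemma fmapfZ X Y a (f : cHom D X Y) x : fmap F f (a *: x) = a *: fmap F f x.
Proof. by have := @fmap_lin _ _ F _ _ f a x 0; rewrite !addr0 fmapf0 addr0. Qed.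
Lemma fmapfD X Y (f : cHom D X Y) x y : fmap F f (x + y) = fmap F f x + fmap F f y.
Proof. by have := @fmap_lin _ _ F _ _ f 1 x y; rewrite !scale1r. Qed.
Lemma fmapfB X Y (f : cHom D X Y) x y : fmap F f (x - y) = fmap F f x - fmap F f y.
Proof. by rewrite fmapfD -scaleN1r fmapfZ scaleN1r. Qed.

Lemma ccompf0 X Y Z (f : cHom D Y Z) : ccomp D f (0 : cHom D X Y) = 0.
Proof.
have h := @ccompDr _ D X Y Z 1 f 0 0; rewrite !scale1r addr0 in h; exact: dbl0 h.
Qed.

Variable G : cObj D.

Lemma End_closed (N : fob F G -> Prop) : @End_submodule _ _ F G N ->
  forall a x y, N x -> N y -> N (a *: x + y).
Proof.
move=> [N0 [NB Ne]] a x y hx hy.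
have hz : N (fmap F (a *: Defs.cid D G) x) by apply: Ne.
rewrite fmapZf fmap1 in hz.
have : N (0 - y) by apply: NB.
move=> h; have := NB _ _ hz h; by rewrite sub0r opprK.
Qed.

Definition bigP (N : fob F G -> Prop) X (y : fob F X) := forall f : cHom D X G, N (fmap F f y).

Lemma bigP_sub (N : fob F G -> Prop) : @End_submodule _ _ F G N -> subfunctor (bigP N).
Proof.
move=> hN; have hc := End_closed hN; case: hN => [N0 [NB Ne]].
split; first by move=> X f; rewrite fmapf0.
split; first by move=> X a x y hx hy f; rewrite fmap_lin; apply: hc.
by move=> X Y f x hx g; rewrite -fmapM; apply: hx.
Qed.

Lemma bigP_G (N : fob F G -> Prop) : @End_submodule _ _ F G N -> forall y, bigP N y <-> N y.
Proof.
move=> [N0 [NB Ne]] y; split; first by move=> /(_ (Defs.cid D G)); rewrite fmap1.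
by move=> hy f; apply: Ne.
Qed.

Lemma sub_End (M : forall X, fob F X -> Prop) : subfunctor M -> @End_submodule _ _ F G (M G).
Proof.
move=> [M0 [Ml Mf]]; split=> //; split; last by move=> e x; apply: Mf.
move=> x y hx hy; have := Ml _ (-1) _ _ hy hx; by rewrite scaleN1r addrC.
Qed.

Lemma part1 (x : fob F G) : radM x -> radF x.
Proof.
move=> hx M [hM [hprop hmax]].
case: (pselect (forall y, M G y)) => [hall|hn]; first exact: hall.
apply: hx; split; first exact: sub_End.
split; first by apply/existsNP.
move=> N' hN' hsub.
have hP := bigP_sub hN'.
have hMP : forall X x, M X x -> bigP N' x.
  by move=> X z hz f; apply: hsub; case: hM => [_ [_ Mf]]; apply: Mf.
case: (hmax _ hP hMP) => [h|h]; [left|right] => y.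
- split; last by apply: hsub.
  by move=> /(bigP_G hN' y) /h.
- by apply/(bigP_G hN' y).
Qed.

Unset Implicit Arguments.
Section QF.
Variables (M : forall X, fob F X -> Prop) (hM : subfunctor M).

Definition msub X : subsp (fob F X) :=
  @Subsp _ (fob F X) (M X) (proj1 hM X) (proj1 (proj2 hM) X).

Definition qfob X : lmodType k := quot (msub X).
Definition qfmap X Y (f : cHom D X Y) (q : qfob X) : qfob Y :=
  pi (msub Y) (fmap F f (qval q)).
Arguments qfmap {X Y}.

Lemma qfmap_pi X Y (f : cHom D X Y) v : qfmap f (pi (msub X) v) = pi (msub Y) (fmap F f v).
Proof.
apply/piE; rewrite -fmapfB; apply: (proj2 (proj2 hM)).
exact: (qval_pi (msub X) v).
Qed.

Lemma qfmapD X Y (a : k) (f g : cHom D X Y) (x : qfob X) :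
  qfmap (a *: f + g) x = a *: qfmap f x + qfmap g x.
Proof. by rewrite /qfmap fmapD pi_lin. Qed.
Lemma qfmap_lin X Y (f : cHom D X Y) (a : k) (x y : qfob X) :
  qfmap f (a *: x + y) = a *: qfmap f x + qfmap f y.
Proof.
elim/quot_ind: x => x; elim/quot_ind: y => y.
by rewrite -pi_lin !qfmap_pi fmap_lin pi_lin.
Qed.
Lemma qfmapM X Y Z (g : cHom D Y Z) (f : cHom D X Y) (x : qfob X) :
  qfmap (ccomp D g f) x = qfmap g (qfmap f x).
Proof. by elim/quot_ind: x => x; rewrite !qfmap_pi fmapM. Qed.
Lemma qfmap1 X (x : qfob X) : qfmap (Defs.cid D X) x = x.
Proof. by elim/quot_ind: x => x; rewrite !qfmap_pi fmap1. Qed.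

Definition QF : klinFun D := KLinFun qfmapD qfmap_lin qfmapM qfmap1.

Definition qeta X (x : fob F X) : fob QF X := pi (msub X) x.
Arguments qeta {X}.

Lemma qeta_epi : epi_nattrans (@qeta).
Proof.
split; last by move=> X; elim/quot_ind => v; exists v.
split; first by move=> X a x y; rewrite /qeta pi_lin.
by move=> X Y f x; rewrite /qeta /= qfmap_pi.
Qed.

Lemma QF_simple : maximal_subfunctor M -> simple_functor QF.
Proof.
move=> [_ [[X0 [x0 nx0]] hmax]]; split.
  exists X0, (qeta x0); apply/eqP => /pi0; exact: nx0.
move=> N' [N0 [Nl Nf]].
pose R X (y : fob F X) := N' X (qeta y).
have hR : subfunctor R.
  split; first by move=> X; rewrite /R /qeta; have -> : pi (msub X) 0 = 0 by apply/pi0; exact: (proj1 hM).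
  split; first by move=> X a x y hx hy; rewrite /R /qeta pi_lin; apply: Nl.
  by move=> X Y f x hx; rewrite /R /qeta -qfmap_pi; apply: (Nf _ _ f).
have hMR : forall X x, M X x -> R X x.
  by move=> X x hx; rewrite /R /qeta; have -> : pi (msub X) x = 0 by apply/pi0.
case: (hmax R hR hMR) => h; [left|right] => X.
- by elim/quot_ind => v /(h X v) hv; apply/pi0.
- by elim/quot_ind => v; apply: h.
Qed.
End QF.
Set Implicit Arguments.

Unset Implicit Arguments.
Section Gen.
Variables (n : nat) (Xs : 'I_n -> cObj D)
  (eta : forall Y, (forall i : 'I_n, cHom D (Xs i) Y) -> fob F Y)
  (elin : forall Y (a : k) (fs gs : forall i : 'I_n, cHom D (Xs i) Y),
        eta Y (fun i => a *: fs i + gs i) = a *: eta Y fs + eta Y gs)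
  (enat : forall Y Z (g : cHom D Y Z) (fs : forall i : 'I_n, cHom D (Xs i) Y),
        eta Z (fun i => ccomp D g (fs i)) = fmap F g (eta Y fs)).

Definition castH (j i : 'I_n) (h : j = i) : cHom D (Xs j) (Xs i) :=
  match h in _ = i' return cHom D (Xs j) (Xs i') with erefl => Defs.cid D (Xs j) end.
Definition ee (i j : 'I_n) : cHom D (Xs j) (Xs i) :=
  match j =P i with ReflectT h => castH j i h | ReflectF _ => 0 end.

Arguments castH {j i}.
Definition restr (s : seq 'I_n) Y (fs : forall i : 'I_n, cHom D (Xs i) Y) :
  forall i : 'I_n, cHom D (Xs i) Y := fun j => if j \in s then fs j else 0.

Lemma eta0 Y : eta Y (fun _ => 0) = 0.
Proof.
have h := elin Y 1 (fun _ => 0) (fun _ => 0).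
have e : (fun i : 'I_n => 1 *: (0 : cHom D (Xs i) Y) + 0) = (fun _ => 0).
  by apply: functional_extensionality_dep => i; rewrite scaler0 addr0.
rewrite e scale1r in h; exact: dbl0 h.
Qed.

Lemma gen_all (Q : forall X, fob F X -> Prop) : subfunctor Q ->
  (forall i, Q (Xs i) (eta (Xs i) (ee i))) ->
  forall Y fs, Q Y (eta Y fs).
Proof.
move=> [Q0 [Ql Qf]] hg Y fs.
suff h : forall s, uniq s -> Q Y (eta Y (restr s Y fs)).
  have e : restr (enum 'I_n) Y fs = fs.
    by apply: functional_extensionality_dep => j; rewrite /restr mem_enum.
  by rewrite -e; apply: h; apply: enum_uniq.
elim=> [|i s IH] /=.
  move=> _; have -> : restr [::] Y fs = (fun _ => 0) by [].
  by rewrite eta0.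
move=> /andP [nis us].
have e : restr (i :: s) Y fs = (fun j => 1 *: ccomp D (fs i) (ee i j) + restr s Y fs j).
  apply: functional_extensionality_dep => j; rewrite /restr /ee in_cons.
  case: (j =P i) => [h|h].
  - by subst j; rewrite /= (negbTE nis) addr0 scale1r ccomp1r.
  - by rewrite /= ccompf0 scaler0 add0r.
rewrite e elin enat; apply: Ql; last exact: IH.
exact: Qf.
Qed.
End Gen.
Set Implicit Arguments.

Lemma subfunctor_ext (Q Q' : forall X, fob F X -> Prop) :
  (forall X x, Q X x <-> Q' X x) -> subfunctor Q -> subfunctor Q'.
Proof.
move=> e [Q0 [Ql Qf]]; split; first by move=> X; apply/e.
split; first by move=> X a x y /e hx /e hy; apply/e; apply: Ql.
by move=> X Y f x /e hx; apply/e; apply: Qf.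
Qed.

Definition TT := {X : cObj D & fob F X}.
Definition UU (P : forall X, fob F X -> Prop) (A : set TT) X (x : fob F X) :=
  P X x \/ A (existT _ X x).
Arguments UU : clear implicits.
Definition PrP (P : forall X, fob F X -> Prop) (A : set TT) :=
  subfunctor (UU P A) /\ exists X x, ~ UU P A X x.

Lemma exists_max (P : forall X, fob F X -> Prop) : fin_gen F -> subfunctor P ->
  (exists X x, ~ P X x) ->
  exists M, maximal_subfunctor M /\ (forall X x, P X x -> M X x).
Proof.
move=> [n [Xs [eta [elin [enat esurj]]]]] hP hPp.
have full : forall Q : forall X, fob F X -> Prop, subfunctor Q ->
    (forall i, Q (Xs i) (eta (Xs i) (ee n Xs i))) -> forall X x, Q X x.
  move=> Q hQ hg X x; have [fs <-] := esurj X x.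
  exact: (gen_all n Xs eta elin enat Q hQ hg).
have Pr0 : PrP P set0.
  split.
    apply: subfunctor_ext hP => X x; split; first by left.
    by case.
  case: hPp => X [x hx]; exists X, x; by case.
have [A [PrA Amax]] : exists A, PrP P A /\ forall B, (A `<` B)%classic -> ~ PrP P B.
  apply: Zorn_bigcup => Fs FsPr tot.
  pose OK (B : set TT) := B = set0 \/ Fs B.
  have prB : forall B, OK B -> PrP P B.
    by move=> B [->|hB]; [exact: Pr0|exact: FsPr].
  have some : forall X x, UU P (\bigcup_(B in Fs) B)%classic X x ->
      exists B, OK B /\ UU P B X x.
    move=> X x [hx|[B hB hx]]; first by exists set0; split; [left|left].
    by exists B; split; [right|right].
  have join : forall B1 B2, OK B1 -> OK B2 -> exists B, OK B /\
      (B1 `<=` B)%classic /\ (B2 `<=` B)%classic.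
    move=> B1 B2 [->|h1]; first by exists B2; split=> //; split=> // t [].
    move=> [->|h2]; first by exists B1; split; [right|split=> // t []].
    case: (tot _ _ h1 h2) => h; [exists B2|exists B1]; (split; [right|split]) => //.
  have mono : forall B1 B2 X x, (B1 `<=` B2)%classic -> UU P B1 X x -> UU P B2 X x.
    by move=> B1 B2 X x h [hx|hx]; [left|right; apply: h].
  have up : forall B X x, OK B -> UU P B X x -> UU P (\bigcup_(B in Fs) B)%classic X x.
    move=> B X x [->|hB] [hx|hx]; [by left|by []|by left|].
    by right; exists B.
  split.
    split; first by move=> X; left; exact: (proj1 hP).
    split.
      move=> X a x y /some [B1 [o1 h1]] /some [B2 [o2 h2]].
      have [B [o [s1 s2]]] := join _ _ o1 o2.
      apply: (up B) => //; case: (prB B o) => [[_ [hl _]] _].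
      by apply: hl; [apply: mono h1|apply: mono h2].
    move=> X Y f x /some [B [o h]]; apply: (up B) => //.
    by case: (prB B o) => [[_ [_ hf]] _]; apply: hf.
  apply: contrapT => hn.
  have hall : forall X x, UU P (\bigcup_(B in Fs) B)%classic X x.
    move=> X x; apply: contrapT => hx; apply: hn; exists X, x; exact: hx.
  have hs : forall s : seq 'I_n, exists B, OK B /\
      forall i, i \in s -> UU P B (Xs i) (eta (Xs i) (ee n Xs i)).
    elim=> [|i s [B [o hB]]]; first by exists set0; split; [left|].
    have [B' [o' h']] := some _ _ (hall (Xs i) (eta (Xs i) (ee n Xs i))).
    have [C [oC [s1 s2]]] := join _ _ o o'.
    exists C; split=> // j; rewrite in_cons => /orP [/eqP ->|hj].
      exact: mono h'.
    by apply: mono (hB j hj).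
  have [B [o hB]] := hs (enum 'I_n).
  case: (prB B o) => [hsub [X [x hx]]]; apply: hx.
  by apply: full hsub _ X x => i; apply: hB; rewrite mem_enum.
exists (UU P A); split; last by move=> X x hx; left.
split; first exact: (proj1 PrA).
split; first exact: (proj2 PrA).
move=> N hN hAN.
case: (pselect (forall X x, N X x)) => [h|h]; first by right.
left; move=> X x; split; last exact: hAN.
pose B (t : TT) := N (projT1 t) (projT2 t).
have eB : forall X x, UU P B X x <-> N X x.
  move=> Y y; split; last by move=> hy; right.
  by case=> // hy; apply: hAN; left.
have PrB : PrP P B.
  split; first by apply: subfunctor_ext hN => Y y; split => /eB.
  by apply: contrapT => hn; apply: h => Y y; apply/eB; apply: contrapT => hy; apply: hn; exists Y, y.
have AB : (A `<=` B)%classic.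
  by case=> Y y hy; rewrite /B /=; apply: hAN; right.
have BA : (B `<=` A)%classic.
  apply: contrapT => hBA; apply: (Amax B) => //; split => //.
move=> hx; right; exact: (BA (existT _ X x)).
Qed.

End Main.

Theorem proposition1p1 (k : fieldType) (D : klinCat k) (F : klinFun D) (G : cObj D) :
  fin_gen F ->
  (forall x : fob F G, radM x -> radF x) /\
  ((forall (S : klinFun D) (eta : forall X, fob F X -> fob S X),
       simple_functor S -> epi_nattrans eta -> exists x : fob S G, x != 0) ->
   forall x : fob F G, radM x <-> radF x).
Proof.
move=> hfg; split; first by move=> x; apply: part1.
move=> H x; split; first by apply: part1.
move=> hx N [Nsub [[y0 ny0] Nm]].
have hP := bigP_sub Nsub.
have hPp : exists X (y : fob F X), ~ bigP N y.
  by exists G, y0 => h; apply: ny0; apply/(bigP_G Nsub y0).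
have [M [Mmax PM]] := exists_max hfg hP hPp.
have hMsub := sub_End G (proj1 Mmax).
have NM : forall z, N z -> M G z.
  by move=> z hz; apply: PM; apply/(bigP_G Nsub z).
case: (Nm (M G) hMsub NM) => h.
  by apply/h; apply: hx.
exfalso.
have [s hs] := H _ _ (@QF_simple _ _ F M (proj1 Mmax) Mmax) (@qeta_epi _ _ F M (proj1 Mmax)).
move: s hs; elim/quot_ind => v; rewrite /= => /eqP; apply.
by apply/pi0; apply: h.
Qed.
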